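(* Let $(a_n)_{n\ge0}$ be a sequence of positive real numbers satisfying $\frac{a_{n+1}}{a_n}=\frac{an+b}{cn+d}$ for all $n\ge0$, where $a,b,c,d\ge0$ are real, $c\le d$, $a$ and $b$ are not both zero, and $c$ and $d$ are not both zero. Then for every $n\ge 0$ the polynomial $p_n(x)=\sum_{i=0}^n a_ix^i$ has exactly $n\bmod 2$ real roots counted with multiplicity (no real root if $n$ is even, exactly one if $n$ is odd). *)

(* Defs.v *)
From HB Require Import structures.
From mathcomp Require Import all_boot all_order all_algebra.
From mathcomp Require Import all_classical all_reals.
Set Implicit Arguments. Unset Strict Implicit. Unset Printing Implicit Defensive.
Import Order.TTheory GRing.Theory Num.Theory.
Local Open Scope ring_scope.

Definition partial_poly (R : realType) (a : nat -> R) (n : nat) : {poly R} :=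
  \sum_(i < n.+1) a i *: 'X^i.

Definition num_real_roots_mult (R : realType) (p : {poly R}) (k : nat) : Prop :=
  exists rs : seq R,
    [/\ uniq rs, (forall x : R, root p x <-> x \in rs)
      & (\sum_(x <- rs) mup x p)%N = k].

(* Main.v *)
Require Import Defs.
From HB Require Import structures.
From mathcomp Require Import all_boot all_order all_algebra.
From mathcomp Require Import all_classical all_reals.
From mathcomp Require Import polyrcf ring lra.
Import Order.TTheory GRing.Theory Num.Theory.
Local Open Scope ring_scope.

Lemma sign_right (R : rcfType) (Q q0 : {poly R}) (r t : R) (k : nat) :
  r < t -> 0 < Q.[t] -> Q = q0 * ('X - r%:P) ^+ k.+1 -> q0.[r] < 0 ->
  exists z, [/\ r < z, z < t & root Q z].
Proof.
move=> rt Qt hQ q0r.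
have e0 : 0 < - q0.[r] by rewrite oppr_gt0.
have [del del0 hdel] := poly_cont r q0 e0.
pose y := r + Num.min del (t - r) / 2.
have m0 : 0 < Num.min del (t - r) by rewrite lt_min del0 subr_gt0.
have hy1 : r < y by rewrite /y ltrDl divr_gt0.
have hm1 : Num.min del (t - r) <= del by rewrite ge_min lexx.
have hm2 : Num.min del (t - r) <= t - r by rewrite ge_min lexx orbT.
have hy2 : y < t by rewrite /y; lra.
have hyd : `|y - r| < del by rewrite ger0_norm /y; lra.
have := hdel y hyd; rewrite ltr_norml => /andP[_ h].
have q0y : q0.[y] < 0 by lra.
have Qy : Q.[y] < 0.
  rewrite hQ hornerM horner_exp !hornerE.
  have : 0 < (y - r) ^+ k.+1 by rewrite exprn_gt0 // subr_gt0.
  by move=> h2; rewrite pmulr_llt0.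
have QQ : Q.[y] * Q.[t] < 0 by rewrite pmulr_llt0.
have [z zi rz] := poly_ivtoo (ltW hy2) QQ.
move: zi; rewrite in_itv /= => /andP[z1 z2].
by exists z; split => //; apply: lt_trans z1.
Qed.

Lemma largest_root (R : rcfType) (Q : {poly R}) (r0 t : R) :
  Q != 0 -> root Q r0 -> r0 < t ->
  exists r, [/\ root Q r, r < t & forall z, r < z -> z < t -> ~~ root Q z].
Proof.
move=> Q0 Qr0 rt.
case: (prev_rootP Q (r0 - 1) t).
- by move=> /eqP; rewrite (negPf Q0).
- move=> y _ Qy yi hno; exists y; split.
  + by apply/rootP.
  + by move: yi; rewrite in_itv /= => /andP[].
  + by move=> z z1 z2; apply: hno; rewrite in_itv /= z1 z2.
- move=> c _ _ hno; exfalso.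
  have : r0 \in `](r0 - 1), t[ by rewrite in_itv /= rt andbT ltrBlDr ltrDl.
  by move/hno; rewrite Qr0.
Qed.

Lemma ident (R : realType) (s : nat -> R) (a b c d : R) (n : nat)
  (hr : forall i : nat, (c * i%:R + d) * s i.+1 = (a * i%:R + b) * s i) :
  ('X * (c%:P - a *: 'X)) * (partial_poly s n)^`() + ((d - c)%:P - b *: 'X) * partial_poly s n
  = ((d - c) * s 0)%:P - ((c * n.+1%:R + d - c) * s n.+1) *: 'X^(n.+1).
Proof.
pose u i := ((c * i%:R + d - c) * s i) *: ('X^i : {poly R}).
have term : forall i, ('X * (c%:P - a *: 'X)) * (s i *: ('X^i)^`())
   + ((d - c)%:P - b *: 'X) * (s i *: 'X^i) = u i - u i.+1.
  move=> i; rewrite /u derivXn.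
  have e : (c * i.+1%:R + d - c) * s i.+1 = (a * i%:R + b) * s i.
    by rewrite -hr mulrSr; congr (_ * _); ring.
  rewrite e -!mul_polyC; case: i e => [|j] e.
    rewrite !mulr0n /= !expr0 expr1 !(polyCM, polyCD, polyCB, polyCN, polyC_natr).
    ring.
  rewrite /= -mulr_natr !exprS !(polyCM, polyCD, polyCB, polyCN, polyC_natr). ring.
rewrite /partial_poly raddf_sum big_distrr /= big_distrr /= -big_split /=.
under eq_bigr do rewrite derivZ term.
rewrite -(big_mkord xpredT (fun i => u i - u i.+1)).
under eq_bigr do rewrite -opprB.
rewrite sumrN telescope_sumr // opprB /u expr0 mulr0 add0r -mul_polyC mulr1.
done.
Qed.

Theorem theorem8p2 (R : realType) (s : nat -> R) (a b c d : R)
  (hpos : forall n : nat, 0 < s n)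
  (hrec : forall n : nat, s n.+1 / s n = (a * n%:R + b) / (c * n%:R + d))
  (ha : 0 <= a) (hb : 0 <= b) (hc : 0 <= c) (hd : 0 <= d)
  (hcd : c <= d) (hab : ~ (a = 0 /\ b = 0)) (hcd0 : ~ (c = 0 /\ d = 0)) :
  forall n : nat, num_real_roots_mult (partial_poly s n) (n %% 2)%N.
Proof.
have d0 : 0 < d.
  case: (eqVneq d 0) => [d0|dn0]; last by rewrite lt_neqAle eq_sym dn0.
  by exfalso; apply: hcd0; split => //; lra.
have hr : forall i : nat, (c * i%:R + d) * s i.+1 = (a * i%:R + b) * s i.
  move=> i; have den : 0 < c * i%:R + d.
    have := ler0n R i; nra.
  have e : s i.+1 = (a * i%:R + b) / (c * i%:R + d) * s i.
    by rewrite -hrec divfK // gt_eqF.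
  rewrite e; field; by rewrite gt_eqF.
move=> n.
set P := partial_poly s n.
set K := (c * n.+1%:R + d - c) * s n.+1.
have Kpos : 0 < K.
  rewrite /K; apply: mulr_gt0 => //.
  have := ler0n R n; rewrite -addn1 natrD; nra.
have Ppos : forall x, 0 <= x -> 0 < P.[x].
  move=> x x0; rewrite /P /partial_poly horner_sum big_ord_recl /=.
  rewrite hornerZ expr0 !hornerE.
  have : 0 <= \sum_(i < n) (s (bump 0 i) *: 'X^(bump 0 i)).[x].
    apply: sumr_ge0 => i _; rewrite hornerZ hornerXn.
    by apply: mulr_ge0; [apply: ltW|apply: exprn_ge0].
  have := hpos 0%N; lra.
have rneg : forall x, root P x -> x < 0.
  move=> x; rewrite ltNge; apply: contraL => x0.
  by rewrite /root gt_eqF // Ppos.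
have P0 : P != 0.
  by apply/eqP => P0; have := Ppos 0 (lexx 0); rewrite P0 horner0 ltxx.
have iden := @ident R s a b c d n hr.
have ev : forall x, x * (c - a * x) * P^`().[x] + (d - c - b * x) * P.[x]
                  = (d - c) * s 0%N - K * x ^+ n.+1.
  move=> x; have := congr1 (fun p => p.[x]) iden; rewrite /= !hornerE.
  by [].
have gle : forall x, x < 0 -> x * (c - a * x) <= 0.
  move=> x x0; nra.
have P'fact : forall (q : {poly R}) r, P = q * ('X - r%:P) -> P^`().[r] = q.[r].
  move=> q r ->; rewrite derivM derivXsubC !hornerE subrr; ring.
have top : forall r0, root P r0 -> exists r (q : {poly R}),
   [/\ root P r, r < 0, P = q * ('X - r%:P), 0 <= q.[r] &
       forall z, r < z -> z < 0 -> ~~ root P z].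
  move=> r0 Pr0.
  have [r [Pr r0' hno]] := @largest_root R P r0 0 P0 Pr0 (rneg _ Pr0).
  have [q hq] := factor_theorem P r Pr.
  exists r, q; split => //.
  rewrite leNgt; apply/negP => qr.
  have Pq : P = q * ('X - r%:P) ^+ 0.+1 by rewrite expr1.
  have [z [z1 z2 Pz]] := @sign_right R P q r 0 0%N r0' (Ppos 0 (lexx 0)) Pq qr.
  by move: (hno z z1 z2); rewrite Pz.
rewrite modn2.
case: (boolP (odd n)) => hn; last first.
  exists [::]; split; [done| |by rewrite big_nil]; move=> x; split => // Px; exfalso.
  have [r [q [Pr r0 hq qr _]]] := top x Px.
  have e := ev r; rewrite (P'fact q r hq) (rootP Pr) mulr0 addr0 in e.
  have h1 : r ^+ n.+1 < 0 by rewrite exprn_odd_lt0 //= hn.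
  have h2 : r * (c - a * r) * q.[r] <= 0 by apply: mulr_le0_ge0 => //; exact: gle.
  have h3 : K * r ^+ n.+1 < 0 by rewrite pmulr_rlt0.
  have h4 : 0 <= (d - c) * s 0%N by apply: mulr_ge0; [lra|apply: ltW].
  lra.
have sz : size P = n.+1.
  by rewrite /P /partial_poly -poly_def size_poly_eq // gt_eqF.
have [r0 Pr0] : {x | root P x} by apply: odd_poly_root; rewrite sz /= hn.
have [r [q [Pr r0' hq qr hno]]] := top r0 Pr0.
have qpos : 0 < q.[r].
  rewrite lt_neqAle qr andbT eq_sym; apply/negP => /eqP q0.
  have [q2 hq2] := factor_theorem q r (introT rootP q0).
  have hP2 : P = q2 * ('X - r%:P) ^+ 2 by rewrite hq hq2 -mulrA expr2.
  have e : (('X * (c%:P - a *: 'X)) * P^`() + ((d - c)%:P - b *: 'X) * P)^`().[r]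
     = (((d - c) * s 0%N)%:P - K *: 'X^(n.+1))^`().[r] by rewrite iden.
  rewrite hP2 !derivE !hornerE subrr /= in e.
  rewrite ?(add0r, addr0, subrr, mulr0, mul0r) hornerMn hornerXn -mulr_natr in e.
  have h1 : r ^+ n < 0 by rewrite exprn_odd_lt0.
  have h2 : r ^+ n * n.+1%:R < 0 by rewrite nmulr_rlt0 // ltr0Sn.
  have h3 : K * (r ^+ n * n.+1%:R) < 0 by rewrite pmulr_rlt0.
  have h4 := gle r r0'.
  have q2n : q2.[r] < 0 by nra.
  have [z [z1 z2 Pz]] := @sign_right R P q2 r 0 1%N r0' (Ppos 0 (lexx 0)) hP2 q2n.
  by move: (hno z z1 z2); rewrite Pz.
have dfac : forall (q' : {poly R}) t, (q' * ('X - t%:P))^`().[t] = q'.[t].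
  move=> q' t; rewrite derivM derivXsubC !hornerE subrr; ring.
exists [:: r]; split => //; last first.
  rewrite big_seq1 hq mupMr; last by rewrite /root gt_eqF.
  by have := mup_XsubCX 1 r r; rewrite expr1 eqxx.
move=> x; split; last by rewrite inE => /eqP ->.
move=> Px; rewrite inE; case: (ltgtP x r) => // hx; last first.
  by move: (hno x hx (rneg x Px)); rewrite Px.
exfalso.
have qx : root q x.
  move: (rootP Px); rewrite hq hornerM !hornerE => /eqP.
  by rewrite mulf_eq0 subr_eq0 (lt_eqF hx) orbF.
have q0 : q != 0 by apply: contra P0 => /eqP q0; rewrite hq q0 mul0r.
have [r2 [qr2 r2r hno2]] := @largest_root R q x r q0 qx hx.
have er := ev r; rewrite hq dfac in er.
have er2 := ev r2; rewrite hq derivM derivXsubC !hornerE (rootP qr2) in er2.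
rewrite -hq (rootP Pr) mulr0 addr0 in er.
rewrite ?mulr0 ?mul0r ?addr0 in er2.
have [q3 hq3] := factor_theorem q r2 qr2.
rewrite hq3 dfac in er2.
have er2' : r2 * (c - a * r2) * (q3.[r2] * (r2 - r)) = (d - c) * s 0%N - K * r2 ^+ n.+1.
  by rewrite -er2 /= mulr0 mul0r addr0.
clear er2.
have hpow : r ^+ n.+1 < r2 ^+ n.+1.
  have h : (- r) ^+ n.+1 < (- r2) ^+ n.+1.
    rewrite ltrXn2r //.
    - by rewrite oppr_ge0 ltW.
    - by rewrite ltrN2.
  by rewrite (exprNn r) (exprNn r2) -signr_odd /= hn expr0 !mul1r in h.
have g1 := gle r r0'.
have g2 := gle r2 (lt_trans r2r r0').
have fr : r * (c - a * r) * q.[r] <= 0 by apply: mulr_le0_ge0 => //; exact: ltW.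
have kp : K * r ^+ n.+1 < K * r2 ^+ n.+1 by rewrite ltr_pM2l.
have A : r2 * (c - a * r2) * (q3.[r2] * (r2 - r)) < 0.
  rewrite er2'; rewrite er in fr; lra.
have Apos : 0 < q3.[r2] * (r2 - r).
  rewrite ltNge; apply/negP => hA.
  have : 0 <= r2 * (c - a * r2) * (q3.[r2] * (r2 - r)) by apply: mulr_le0.
  lra.
have q3n : q3.[r2] < 0.
  have h : r2 - r < 0 by rewrite subr_lt0.
  by move: Apos; rewrite nmulr_lgt0.
have hq3' : q = q3 * ('X - r2%:P) ^+ 0.+1 by rewrite expr1.
have [z [z1 z2 qz]] := @sign_right R q q3 r2 r 0%N r2r qpos hq3' q3n.
by move: (hno2 z z1 z2); rewrite qz.
Qed.
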